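(* Let $R$, $G$, $*$, $\sigma$ and $\mathcal{S}$ be as in the context. If $\mathcal{S}$ is anticommutative, then $c_x=x^*x^{-1}$ lies in the center $\mathcal{Z}(G)$ of $G$ for every $x\in G$.
   Context: Throughout, $R$ is a commutative ring with unity with $\operatorname{char}(R)\neq 2$, and $\mathcal{U}(R)$ is its unit group. $G$ is a group with an involution $*$, i.e. a map $x\mapsto x^*$ with $(xy)^*=y^*x^*$ and $(x^* )^*=x$. The map $\sigma:G\to\mathcal{U}(R)$ is a nontrivial group homomorphism with kernel $N=\ker\sigma$, and it is compatible with $*$: $xx^*\in N$ for all $x\in G$. The group ring $RG$ carries the involution $\left(\sum_{x\in G}\alpha_x x\right)^{\sigma*}=\sum_{x\in G}\sigma(x)\alpha_x x^*$. Write $G_*=\{x\in G: x^*=x\}$ and $N_*=G_*\cap N$. Let $\mathcal{S}$ be the $R$-submodule of $RG$ spanned by the union of the following three sets: - $2\mathcal{S}_1=\{2x: x\in N_*\}$; - $\mathcal{S}_2=\{\alpha x: x\in G_*\setminus N,\ \alpha\in R,\ \alpha(1-\sigma(x))=0\}$; - $\mathcal{S}_3=\{x+\sigma(x)x^*: x\in G\setminus G_*\}$. $\mathcal{S}$ is called anticommutative if $ab+ba=0$ for all $a,b\in\mathcal{S}$. *)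

(* Defs.v *)
From HB Require Import structures.
From mathcomp Require Import all_boot all_order all_algebra.
Set Implicit Arguments. Unset Strict Implicit. Unset Printing Implicit Defensive.
Import GRing.Theory.

Local Open Scope ring_scope.

Section GroupRing.
Variables (R : comNzRingType) (G : groupType).

(* Elements of the group ring RG are represented by finite formal sums
   sum_i r_i g_i, i.e. lists of pairs (r_i, g_i); two lists represent the same
   element of RG iff they have the same coefficient function [coef]. *)
Definition RG := seq (R * G).

Definition coef (a : RG) (g : G) : R := \sum_(p <- a | p.2 == g) p.1.

Definition addRG (a b : RG) : RG := a ++ b.
Definition scaleRG (r : R) (a : RG) : RG := [seq (r * p.1, p.2) | p <- a].
Definition mulRG (a b : RG) : RG :=
  [seq (p.1 * q.1, (p.2 * q.2)%g) | p <- a, q <- b].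

Definition zeroRG (a : RG) : Prop := forall g : G, coef a g = 0.

Variables (sigma : G -> R) (st : G -> G).

(* 2 S_1 = { 2x : x in N_* },  N = ker sigma, G_* = fixed points of st *)
Definition gen1 (a : RG) : Prop :=
  exists x : G, st x = x /\ sigma x = 1 /\ a = [:: (2%:R, x)].
Definition gen2 (a : RG) : Prop :=
  exists (x : G) (alpha : R),
    st x = x /\ sigma x != 1 /\ alpha * (1 - sigma x) = 0 /\ a = [:: (alpha, x)].
Definition gen3 (a : RG) : Prop :=
  exists x : G, st x != x /\ a = [:: (1, x); (sigma x, st x)].

Definition genS (a : RG) : Prop := gen1 a \/ gen2 a \/ gen3 a.

Inductive inS : RG -> Prop :=
  | inS_nil : inS [::]
  | inS_cons (r : R) (g a : RG) : genS g -> inS a -> inS (addRG (scaleRG r g) a).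

Definition anticommS : Prop :=
  forall a b : RG, inS a -> inS b -> zeroRG (addRG (mulRG a b) (mulRG b a)).

End GroupRing.

(* Main.v *)
Require Import Defs.
From HB Require Import structures.
From mathcomp Require Import all_boot all_order all_algebra.
From mathcomp Require Import ring.
Import GRing.Theory.
Local Open Scope ring_scope.

Module GLm.

Section GL.
Variable (G : groupType).
Local Open Scope group_scope.

Lemma cancel_l (c a b : G) : c * a = a * c -> c * (a * b) = (a * b) * c -> c * b = b * c.
Proof. move=> h1 h2; apply: (mulgI a); by rewrite [LHS]mulgA -h1 -mulgA h2 -mulgA. Qed.

Lemma cancel_r (c a b : G) : c * a = a * c -> c * (b * a) = (b * a) * c -> c * b = b * c.
Proof. move=> h1 h2; apply: (mulIg a); by rewrite -[LHS]mulgA h2 -mulgA -h1 mulgA. Qed.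

Variables (x X : G).
Hypotheses (hc : x * X = X * x) (hsq : X * X = x * x).

Lemma cVX : x^-1 * X = X * x^-1.
Proof. apply: (mulgI x); rewrite mulVKg mulgA hc mulgK //. Qed.

Lemma t_x : (X * x^-1) * x = x * (X * x^-1).
Proof. by rewrite mulgVK mulgA hc mulgK. Qed.

Lemma t_X : (X * x^-1) * X = X * (X * x^-1).
Proof. by rewrite -mulgA cVX. Qed.

Lemma t_inv : X * x^-1 = x * X^-1.
Proof. apply: (mulIg X); by rewrite t_X mulgA hsq mulgK mulgVK. Qed.

Lemma tx_eq : X = (X * x^-1) * x.
Proof. by rewrite mulgVK. Qed.

Lemma commV (a b : G) : a * b = b * a -> a^-1 * b = b * a^-1.
Proof. move=> h; apply: (mulgI a); by rewrite mulVKg mulgA h mulgK. Qed.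

Variables (y Y : G).
Hypotheses (hcy : y * Y = Y * y) (hsqy : Y * Y = y * y).

Lemma G_tsinv : X * x^-1 = y * Y^-1 -> (X * x^-1) * y = y * (X * x^-1).
Proof. move=> E; rewrite E -mulgA (commV _ _ (esym hcy)) //. Qed.

Lemma G_ts : X * x^-1 = Y * y^-1 -> (X * x^-1) * y = y * (X * x^-1).
Proof. move=> E; by rewrite E mulgVK mulgA hcy mulgK. Qed.

Lemma G_coll : X * Y = x * y -> (X * x^-1) * y = y * (X * x^-1).
Proof.
move=> E; apply: G_tsinv; rewrite -cVX; apply: (mulIg Y).
by rewrite mulgVK -mulgA E mulKg.
Qed.

Lemma G_a : x * y = y * X -> X * y = y * x -> (X * x^-1) * y = y * (X * x^-1).
Proof.
move=> E1 E2.
have e1 : x^-1 * y = y * X^-1 by apply: (mulgI x); rewrite mulVKg mulgA E1 mulgK.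
by rewrite -mulgA e1 mulgA E2 -mulgA -t_inv.
Qed.

Lemma G_c : x * y = y * X -> X * y = Y * X -> (X * x^-1) * y = y * (X * x^-1).
Proof.
move=> E1 E2; apply: G_ts.
have eY : Y = X * y * X^-1 by rewrite E2 mulgK.
have e : X^-1 * y^-1 = y^-1 * x^-1 by rewrite -invgM -E1 invgM.
by rewrite eY -!mulgA e mulVKg.
Qed.

Lemma G_f : x * y = Y * x -> X * y = y * x -> (X * x^-1) * y = y * (X * x^-1).
Proof.
move=> E1 E2; apply: G_tsinv.
have eY : Y = x * y * x^-1 by rewrite E1 mulgK.
have eX : X = y * x * y^-1 by rewrite -E2 mulgK.
by rewrite eX eY !invgM invgK !mulgA.
Qed.

Lemma G_d : x * Y = y * x -> X * Y = y * X -> (X * x^-1) * y = y * (X * x^-1).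
Proof.
move=> E2 E3; apply: (mulIg x).
by rewrite -mulgA -E2 mulgA mulgVK E3 -mulgA mulgVK.
Qed.

End GL.
Local Open Scope group_scope.

Lemma G_comm (G : groupType) (x X z : G) : x * X = X * x ->
  x * z = z * x -> X * z = z * X -> (X * x^-1) * z = z * (X * x^-1).
Proof.
move=> hc E1 E2; apply: (mulIg x).
by rewrite -mulgA -E1 mulgA mulgVK E2 -mulgA mulgVK.
Qed.


Lemma nc' (G : groupType) (x X y Y : G) : y * Y = Y * y -> Y * Y = y * y -> x * Y = X * y -> X * Y = x * y.
Proof.
move=> hcy hsqy E; apply: (mulgI x^-1); rewrite mulKg mulgA.
have e : x^-1 * X = Y * y^-1.
  by apply: (mulIg y); rewrite -mulgA -E mulKg mulgVK.
by rewrite e (@t_inv _ y Y hcy hsqy : Y * y^-1 = y * Y^-1) mulgVK.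
Qed.
Arguments G_coll {G x X} hc {y Y} hcy _.
Arguments G_a {G x X} hc hsq {y} _ _.
Arguments G_c {G x X y Y} hcy _ _.
Arguments G_f {G x X y Y} hcy _ _.
Arguments G_d {G x X y Y} _ _.
Arguments G_comm {G x X z} _ _ _.
Arguments nc' {G x X y Y} _ _ _.
Arguments t_x {G x X} hc.
Arguments t_X {G x X} hc.
Arguments cancel_r {G c a b} _ _.
Arguments cancel_l {G c a b} _ _.

End GLm.
Import GLm.
Lemma match2 (R : nzRingType) (T : eqType) (a b1 b2 : T) (c d1 d2 : R) : b1 != b2 ->
  c + ((if b1 == a then d1 else 0) + ((if b2 == a then d2 else 0) + 0)) = 0 ->
  [\/ c = 0, a = b1 /\ c + d1 = 0 | a = b2 /\ c + d2 = 0].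
Proof.
move=> n12; have n21 : b2 != b1 by rewrite eq_sym.
case: (eqVneq b1 a) => [<-|n1]; first by rewrite (negbTE n21) /= !addr0 => h; constructor 2.
case: (eqVneq b2 a) => [<-|n2] /=; first by rewrite !addr0 !add0r => h; constructor 3.
by rewrite !addr0 => h; constructor 1.
Qed.

Lemma match4 (R : nzRingType) (T : eqType) (a b1 b2 b3 b4 : T) (c d1 d2 d3 d4 : R) :
  b1 != b2 -> b1 != b3 -> b1 != b4 -> b2 != b3 -> b2 != b4 -> b3 != b4 ->
  c + ((if b1 == a then d1 else 0) + ((if b2 == a then d2 else 0) +
    ((if b3 == a then d3 else 0) + ((if b4 == a then d4 else 0) + 0)))) = 0 ->
  c = 0 \/ (a = b1 /\ c + d1 = 0) \/ (a = b2 /\ c + d2 = 0) \/ (a = b3 /\ c + d3 = 0)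
    \/ (a = b4 /\ c + d4 = 0).
Proof.
move=> n12 n13 n14 n23 n24 n34.
have n21 : b2 != b1 by rewrite eq_sym.
have n31 : b3 != b1 by rewrite eq_sym.
have n41 : b4 != b1 by rewrite eq_sym.
have n32 : b3 != b2 by rewrite eq_sym.
have n42 : b4 != b2 by rewrite eq_sym.
have n43 : b4 != b3 by rewrite eq_sym.
case: (eqVneq b1 a) => [<-|n1].
  rewrite (negbTE n21) (negbTE n31) (negbTE n41) /= !addr0 => h; by right; left.
case: (eqVneq b2 a) => [<-|n2].
  rewrite (negbTE n32) (negbTE n42) /= !addr0 !add0r => h; by do 2 right; left.
case: (eqVneq b3 a) => [<-|n3].
  rewrite (negbTE n43) /= !addr0 !add0r => h; by do 3 right; left.
case: (eqVneq b4 a) => [<-|n4] /=.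
  rewrite !addr0 !add0r => h; by do 4 right.
by rewrite !addr0 => h; left.
Qed.

Arguments match2 {R T a b1 b2 c d1 d2}.
Arguments match4 {R T a b1 b2 b3 b4 c d1 d2 d3 d4}.

Section C.
Variables (R : comNzRingType) (G : groupType).

Lemma coef_cons (r : R) (h : G) l g : coef ((r,h)::l) g = (if h == g then r else 0) + coef l g.
Proof. rewrite /coef big_cons /=; case: eqP => _ //; by rewrite add0r. Qed.

Lemma coef_nil g : coef ([::] : RG R G) g = 0.
Proof. by rewrite /coef big_nil. Qed.

Variables (st : G -> G) (sigma : G -> R) (hS : anticommS sigma st).

Lemma inS3 x : st x != x -> inS sigma st (addRG (scaleRG 1 [:: (1, x); (sigma x, st x)]) [::]).
Proof. move=> h; apply: inS_cons; [right; right; exists x; split => // | exact: inS_nil]. Qed.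


Lemma eqL (a b c : G) : ((c * a)%g == (c * b)%g) = (a == b).
Proof. apply: inj_eq; exact: mulgI. Qed.
Lemma eqR (a b c : G) : ((a * c)%g == (b * c)%g) = (a == b).
Proof. by apply/eqP/eqP => [/mulIg|->]. Qed.

Hypothesis hchar : (2%:R : R) != 0.
Hypothesis sigma_unit : forall x : G, exists y : R, sigma x * y = 1.

Lemma unit_kill (c : R) x : c * sigma x = 0 -> c = 0.
Proof. case: (sigma_unit x) => w hw Hc; by rewrite -[c]mulr1 -hw mulrA Hc mul0r. Qed.

Lemma two_unit x : 2%:R * sigma x != 0.
Proof. by apply/negP => /eqP /unit_kill /eqP; apply/negP. Qed.

Lemma self x : st x != x ->
  [/\ (x * st x = st x * x)%g, (st x * st x = x * x)%g & (4%:R : R) = 0].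
Proof.
move=> h; have := hS _ _ (inS3 _ h) (inS3 _ h); rewrite /zeroRG /addRG /mulRG /scaleRG /= => H.
have hx : (x == st x) = false by rewrite eq_sym (negbTE h).
have E1 : (st x * st x = x * x)%g.
  have := H (x * x)%g; rewrite !coef_cons coef_nil eqxx ?eqL ?eqR ?hx ?(negbTE h) /=.
  case: eqP => // _ Hc; exfalso; move/eqP: hchar; apply; rewrite -Hc; ring.
have E2 : (x * st x = st x * x)%g.
  have := H (x * st x)%g; rewrite !coef_cons coef_nil eqxx ?eqL ?eqR ?hx ?(negbTE h) /=.
  case: eqP => [//|_ Hc]; exfalso; move/eqP: (two_unit x); apply; rewrite -Hc; ring.
split => //; apply: (@unit_kill _ x).
have := H (x * st x)%g; rewrite !coef_cons coef_nil eqxx E2 eqxx ?eqL ?eqR ?hx ?(negbTE h) /= => Hc.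
rewrite -Hc; ring.
Qed.

Lemma inS2 z : st z = z -> 2%:R * (1 - sigma z) = 0 ->
  inS sigma st (addRG (scaleRG 1 [:: (2%:R, z)]) [::]).
Proof.
move=> hz h2; apply: inS_cons; last exact: inS_nil.
case: (eqVneq (sigma z) 1) => hs.
  by left; exists z.
by right; left; exists z, 2%:R.
Qed.

Lemma symgood x z : st x != x -> st z = z -> 2%:R * (1 - sigma z) = 0 ->
  (st x * x^-1 * z = z * (st x * x^-1))%g.
Proof.
move=> h hz h2; have [hc hsq h4] := self _ h.
have := hS _ _ (inS3 _ h) (inS2 _ hz h2); rewrite /zeroRG /addRG /mulRG /scaleRG /= => H.
have hx : (x == st x) = false by rewrite eq_sym (negbTE h).
have nb : (z * x)%g != (z * st x)%g by rewrite eqL hx.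
have := H (x * z)%g; rewrite !coef_cons coef_nil eqxx ?eqL ?eqR ?hx ?(negbTE h) /= add0r.
case/(match2 nb) => [Hc|[E1 Hc]|[E1 Hc]].
- exfalso; move/eqP: hchar; apply; rewrite -Hc; ring.
- have := H (st x * z)%g; rewrite !coef_cons coef_nil eqxx ?eqL ?eqR ?hx ?(negbTE h) /= add0r.
  case/(match2 nb) => [Hc2|[E2 Hc2]|[E2 Hc2]].
  + exfalso; move/eqP: (two_unit x); apply; rewrite -Hc2; ring.
  + by move: h; rewrite -(eqR _ _ z) E2 -E1 eqxx.
  + exact: (G_comm hc E1 E2).
- have := H (st x * z)%g; rewrite !coef_cons coef_nil eqxx ?eqL ?eqR ?hx ?(negbTE h) /= add0r.
  case/(match2 nb) => [Hc2|[E2 Hc2]|[E2 Hc2]].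
  + exfalso; move/eqP: (two_unit x); apply; rewrite -Hc2; ring.
  + exact: (G_a hc hsq E1 E2).
  + by move: h; rewrite -(eqR _ _ z) E2 -E1 eqxx.
Qed.

Lemma sigma_ne0 x : sigma x != 0.
Proof. apply/negP => /eqP h0; move/negP: (two_unit x); apply; by rewrite h0 mulr0. Qed.

Hypothesis st_mul : forall x y : G, st (x * y)%g = (st y * st x)%g.
Hypothesis st_invol : forall x : G, st (st x) = x.
Hypothesis sigma_mul : forall x y : G, sigma (x * y)%g = sigma x * sigma y.

Ltac kill hne Hc := exfalso; apply: (negP hne); apply/eqP; rewrite -Hc; ring.

Lemma nonsym x y : st x != x -> st y != y -> (st x * x^-1 * y = y * (st x * x^-1))%g.
Proof.
move=> h hy; have [hc hsq h4] := self _ h; have [hcy hsqy _] := self _ hy.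
case: (eqVneq (st x * st y)%g (x * y)%g) => [Ecol|nc]; first exact: (G_coll hc hcy Ecol).
have hx : (x == st x) = false by rewrite eq_sym (negbTE h).
have hy2 : (y == st y) = false by rewrite eq_sym (negbTE hy).
have nc2 : (x * st y)%g != (st x * y)%g.
  by apply/negP => /eqP /(nc' hcy hsqy) E; by rewrite E eqxx in nc.
have nc3 : ((x * y)%g == (st x * st y)%g) = false by rewrite eq_sym (negbTE nc).
have nc4 : ((st x * y)%g == (x * st y)%g) = false by rewrite eq_sym (negbTE nc2).
have n12 : (y * x)%g != (y * st x)%g by rewrite eqL hx.
have n13 : (y * x)%g != (st y * x)%g by rewrite eqR hy2.
have n14 : (y * x)%g != (st y * st x)%g.
  apply/negP => /eqP /(congr1 st); rewrite !st_mul !st_invol => E; by rewrite E eqxx in nc.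
have n23 : (y * st x)%g != (st y * x)%g.
  apply/negP => /eqP /(congr1 st); rewrite !st_mul !st_invol => E; by rewrite E eqxx in nc2.
have n24 : (y * st x)%g != (st y * st x)%g by rewrite eqR hy2.
have n34 : (st y * x)%g != (st y * st x)%g by rewrite eqL hx.
have o1 : (1 : R) != 0 := oner_neq0 R.
have sx0 := sigma_ne0 x; have sy0 := sigma_ne0 y.
have sxy : sigma x * sigma y != 0 by rewrite -sigma_mul sigma_ne0.
have t2x := two_unit x; have t2y := two_unit y.
have t2xy : 2%:R * (sigma x * sigma y) != 0 by rewrite -sigma_mul two_unit.
have tx := t_x hc; 
have := hS _ _ (inS3 _ h) (inS3 _ hy); rewrite /zeroRG /addRG /mulRG /scaleRG /= => H.
have := H (x * y)%g; rewrite !coef_cons coef_nil eqxx ?eqL ?eqR ?hx ?hy2 ?(negbTE h) ?(negbTE hy) ?(negbTE nc) /= !add0r.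
case/(match4 n12 n13 n14 n23 n24 n34) => [Hc|[[E1 Hc]|[[E1 Hc]|[[E1 Hc]|[E1 Hc]]]]].
- kill o1 Hc.
- kill hchar Hc.
- (* xy = y X *)
  have := H (st x * y)%g; rewrite !coef_cons coef_nil eqxx ?eqL ?eqR ?hx ?hy2 ?(negbTE h) ?(negbTE hy) ?nc4 ?(negbTE nc2) /= !add0r.
  case/(match4 n12 n13 n14 n23 n24 n34) => [Hc2|[[E2 Hc2]|[[E2 Hc2]|[[E2 Hc2]|[E2 Hc2]]]]].
  + kill sx0 Hc2.
  + exact: (G_a hc hsq E1 E2).
  + by move: h; rewrite -(eqR _ _ y) E2 -E1 eqxx.
  + have := H (st x * st y)%g; rewrite !coef_cons coef_nil eqxx ?eqL ?eqR ?hx ?hy2 ?(negbTE h) ?(negbTE hy) ?nc3 /= !add0r.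
    case/(match4 n12 n13 n14 n23 n24 n34) => [Hc3|[[E3 Hc3]|[[E3 Hc3]|[[E3 Hc3]|[E3 Hc3]]]]].
    * kill sxy Hc3.
    * apply: (cancel_r tx); apply: symgood => //; first by rewrite st_mul -E3.
      rewrite sigma_mul; have -> : 2%:R * (1 - sigma y * sigma x) =
        4%:R - 2%:R * (1 * sigma x * (1 * sigma y) + 1 * 1 * (1 * 1)) by ring.
      by rewrite Hc3 h4; ring.
    * by move: nc; rewrite E3 E1 eqxx.
    * by move: hy; rewrite -(eqL _ _ (st x)) E3 -E2 eqxx.
    * kill t2xy Hc3.
  + exact: (G_c hcy E1 E2).
- (* xy = Y x *)
  have := H (st x * y)%g; rewrite !coef_cons coef_nil eqxx ?eqL ?eqR ?hx ?hy2 ?(negbTE h) ?(negbTE hy) ?nc4 ?(negbTE nc2) /= !add0r.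
  case/(match4 n12 n13 n14 n23 n24 n34) => [Hc2|[[E2 Hc2]|[[E2 Hc2]|[[E2 Hc2]|[E2 Hc2]]]]].
  + kill sx0 Hc2.
  + exact: (G_f hcy E1 E2).
  + kill t2x Hc2.
  + by move: h; rewrite -(eqR _ _ y) E2 -E1 eqxx.
  + have := H (st x * st y)%g; rewrite !coef_cons coef_nil eqxx ?eqL ?eqR ?hx ?hy2 ?(negbTE h) ?(negbTE hy) ?nc3 /= !add0r.
    case/(match4 n12 n13 n14 n23 n24 n34) => [Hc3|[[E3 Hc3]|[[E3 Hc3]|[[E3 Hc3]|[E3 Hc3]]]]].
    * kill sxy Hc3.
    * apply: (cancel_r tx); apply: symgood => //; first by rewrite st_mul -E3.
      rewrite sigma_mul; have -> : 2%:R * (1 - sigma y * sigma x) =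
        4%:R - 2%:R * (1 * sigma x * (1 * sigma y) + 1 * 1 * (1 * 1)) by ring.
      by rewrite Hc3 h4; ring.
    * have := H (x * st y)%g; rewrite !coef_cons coef_nil eqxx ?eqL ?eqR ?hx ?hy2 ?(negbTE h) ?(negbTE hy) ?nc4 ?(negbTE nc2) /= !add0r.
      case/(match4 n12 n13 n14 n23 n24 n34) => [Hc4|[[E4 Hc4]|[[E4 Hc4]|[[E4 Hc4]|[E4 Hc4]]]]].
      -- kill sy0 Hc4.
      -- exact: (G_d E4 E3).
      -- by move: h; rewrite -(eqR _ _ (st y)) E3 -E4 eqxx.
      -- kill t2y Hc4.
      -- by move: nc2; rewrite E4 -E2 eqxx.
    * by move: nc; rewrite E3 E1 eqxx.
    * kill t2xy Hc3.
- (* xy = Y X *)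
  apply: (cancel_l tx); apply: symgood => //; first by rewrite st_mul -E1.
  rewrite sigma_mul; have -> : 2%:R * (1 - sigma x * sigma y) =
    4%:R - 2%:R * (1 * 1 * (1 * 1) + 1 * sigma y * (1 * sigma x)) by ring.
  by rewrite Hc h4; ring.
Qed.
End C.

Theorem lemma3p11 (R : comNzRingType) (G : groupType)
  (st : G -> G) (sigma : G -> R)
  (hchar : (2%:R : R) != 0)
  (st_mul : forall x y : G, st (x * y)%g = (st y * st x)%g)
  (st_invol : forall x : G, st (st x) = x)
  (sigma_unit : forall x : G, exists y : R, sigma x * y = 1)
  (sigma_mul : forall x y : G, sigma (x * y)%g = sigma x * sigma y)
  (sigma_nontriv : exists x : G, sigma x != 1)
  (sigma_compat : forall x : G, sigma (x * st x)%g = 1)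
  (hS : anticommS sigma st) :
  forall x y : G, ((st x * x^-1) * y)%g = (y * (st x * x^-1))%g.
Proof.
move=> x y.
case: (eqVneq (st x) x) => [->|h]; first by rewrite mulgV mul1g mulg1.
have NS := @nonsym R G st sigma hS hchar sigma_unit st_mul st_invol sigma_mul.
case: (eqVneq (st y) y) => [hy|hy]; last exact: NS.
have [hc hsq _] := @self R G st sigma hS hchar sigma_unit x h.
case: (eqVneq (st (x * y)%g) (x * y)%g) => [E1|n1].
  case: (eqVneq (st (st x * y)%g) (st x * y)%g) => [E2|n2].
    rewrite st_mul hy in E1; rewrite st_mul hy st_invol in E2.
    exact: (G_a hc hsq (esym E1) (esym E2)).
  exact: (cancel_l (t_X hc) (NS _ _ h n2)).
exact: (cancel_l (t_x hc) (NS _ _ h n1)).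
Qed.
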